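(* If $G$ is a graph with $\operatorname{box}(G)=b$, then $G$ contains a simple cycle of length at least $b-3$.
   Context: The boxicity $\operatorname{box}(G)$ is the minimum $b$ such that $G$ is the intersection graph of axis-parallel boxes in $\mathbb{R}^b$ (products of $b$ closed intervals), one box per vertex. *)

(* Defs.v *)
From Stdlib Require Import Reals.
From mathcomp Require Import all_boot.
Set Implicit Arguments. Unset Strict Implicit. Unset Printing Implicit Defensive.

(* A finite simple graph: vertex set a finType T, edge relation e : rel T,
   symmetric and irreflexive (these are hypotheses of the theorem). *)

Definition box_rep (T : finType) (e : rel T) (b : nat)
  (lo hi : T -> 'I_b -> R) : Prop :=
  (forall v i, Rle (lo v i) (hi v i)) /\
  (forall u v, u <> v ->
     (e u v <-> forall i : 'I_b, Rle (lo u i) (hi v i) /\ Rle (lo v i) (hi u i))).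

Definition has_box_rep (T : finType) (e : rel T) (b : nat) : Prop :=
  exists lo hi : T -> 'I_b -> R, @box_rep T e b lo hi.

Definition boxicity_eq (T : finType) (e : rel T) (b : nat) : Prop :=
  has_box_rep e b /\ (forall b', has_box_rep e b' -> b <= b').

Definition simple_cycle (T : finType) (e : rel T) (s : seq T) : Prop :=
  [/\ uniq s, 3 <= size s & cycle e s].

(* Main.v *)
Require Import Defs.
From Stdlib Require Import Reals Classical.
From mathcomp Require Import all_boot zify.
Set Implicit Arguments. Unset Strict Implicit. Unset Printing Implicit Defensive.

Section Anc.
Variable T : finType.
Variable anc : T -> seq T.
Variable S : {set T}.
Hypothesis H3 : forall x, x \in S -> forall p rest, anc x = p :: rest -> anc p = rest.
Hypothesis H4 : forall x, x \in S -> {subset anc x <= S}.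

Lemma anc_nth i : forall x x0, x \in S -> i < size (anc x) ->
  anc (nth x0 (anc x) i) = drop i.+1 (anc x).
Proof.
elim: i => [|i IH] x x0 xS; case E: (anc x) => [|p rest] //= Hi.
  by rewrite (H3 xS E) drop0.
have pS : p \in S by apply: (H4 xS); rewrite E mem_head.
have := IH p x0 pS; rewrite (H3 xS E) => -> //.
Qed.

Lemma anc_mem x y : x \in S -> y \in anc x -> anc y = drop (index y (anc x)).+1 (anc x).
Proof.
move=> xS yA; rewrite -{1}(nth_index y yA) anc_nth // index_mem //.
Qed.

Lemma depth_anc x y : x \in S -> y \in anc x ->
  size (anc y) + (index y (anc x)).+1 = size (anc x).
Proof.
move=> xS yA; rewrite (anc_mem xS yA) size_drop.
have Hi : index y (anc x) < size (anc x) by rewrite index_mem.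
lia.
Qed.

Lemma root_anc x y : x \in S -> y \in anc x -> last y (anc y) = last x (anc x).
Proof.
move=> xS yA; rewrite (anc_mem xS yA).
have Hi : index y (anc x) < size (anc x) by rewrite index_mem.
rewrite -[in RHS](cat_take_drop (index y (anc x)) (anc x)) last_cat.
rewrite (drop_nth y Hi) nth_index //.
Qed.

Lemma anc_depth_inj x u w : x \in S -> u \in anc x -> w \in anc x ->
  size (anc u) = size (anc w) -> u = w.
Proof.
move=> xS uA wA Hs.
have := depth_anc xS uA; have := depth_anc xS wA => H1 H2.
have Hi : index u (anc x) = index w (anc x) by lia.
by rewrite -(nth_index u uA) -(nth_index u wA) Hi.
Qed.
End Anc.

Section Forest.
Variable T : finType.
Variable e : rel T.
Hypothesis e_sym : symmetric e.
Hypothesis e_irr : irreflexive e.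

Definition nforest (S : {set T}) (rho : T -> nat) (anc : T -> seq T) (lo hi : T -> nat) :=
 forall x, x \in S ->
   [/\ path e x (anc x), uniq (x :: anc x), {subset anc x <= S} &
   [/\ (forall p rest, anc x = p :: rest -> anc p = rest),
   rho (last x (anc x)) <= rho x,
   (forall y, y \in S -> e x y -> (x \in anc y) || (y \in anc x)) &
   (forall y, y \in S -> (lo x <= hi y) && (lo y <= hi x) = [|| x == y, x \in anc y | y \in anc x])]].

Lemma nforest0 rho : nforest set0 rho (fun _ => [::]) (fun _ => 0) (fun _ => 0).
Proof. by move=> x; rewrite in_set0. Qed.

Lemma nforest_ex n : forall (S : {set T}), #|S| <= n -> forall rho,
  exists anc lo hi, nforest S rho anc lo hi.
Proof.
elim: n => [|n IH] S HS rho.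
  have -> : S = set0 by apply/eqP; rewrite -cards_eq0; lia.
  by do 3 eexists; apply: nforest0.
case: (set_0Vmem S) => [->|[x0 x0S]]; first by do 3 eexists; apply: nforest0.
pose r := [arg min_(x < x0 in S) rho x].
have [rS rmin] : r \in S /\ forall y, y \in S -> rho r <= rho y.
  by rewrite /r; case: arg_minnP.
pose S' := S :\ r.
have HS' : #|S'| <= n by move: HS; rewrite (cardsD1 r S) rS add1n ltnS.
pose rho' y := if e r y then 0 else (rho y).+1.
have [anc' [lo' [hi' F]]] := IH S' HS' rho'.
pose K := (\max_(y in S') hi' y).+1.
have hiK : forall y, y \in S' -> hi' y < K.
  by move=> y yS; rewrite ltnS; apply: (leq_bigmax_cond (F := hi')).
have H3' : forall x, x \in S' -> forall p rest, anc' x = p :: rest -> anc' p = rest.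
  by move=> x xS; case: (F x xS) => _ _ _ [].
have H4' : forall x, x \in S' -> {subset anc' x <= S'}.
  by move=> x xS; case: (F x xS).
have inS' : forall y, y \in S' = (y != r) && (y \in S) by move=> y; rewrite in_setD1.
have rnA : forall y, y \in S' -> r \notin anc' y.
  move=> y yS; apply/negP => /(H4' y yS); by rewrite inS' eqxx.
pose tch y := e r (last y (anc' y)).
pose anc y := if y == r then [::] else if tch y then rcons (anc' y) r else anc' y.
pose lo y := if y == r then K else if tch y then lo' y + K else lo' y.
pose hi y := if y == r then K + K else if tch y then hi' y + K else hi' y.
have ancE : forall y z, y \in S' -> z != r -> (z \in anc y) = (z \in anc' y).
  move=> y z yS zr; rewrite /anc.
  have -> : (y == r) = false by move: yS; rewrite inS' => /andP[/negbTE].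
  by case: (tch y) => //; rewrite mem_rcons in_cons (negbTE zr).
have ancr : forall y, y \in S' -> (r \in anc y) = tch y.
  move=> y yS; rewrite /anc.
  have -> : (y == r) = false by move: yS; rewrite inS' => /andP[/negbTE].
  case: (tch y); first by rewrite mem_rcons mem_head.
  exact/negbTE/rnA.
have tchA : forall y z, y \in S' -> z \in anc' y -> tch z = tch y.
  by move=> y z yS zA; rewrite /tch (root_anc H3' H4' yS zA).
exists anc, lo, hi => x xS.
case: (eqVneq x r) => [->|xr].
-
  have ancr0 : anc r = [::] by rewrite /anc eqxx.
  rewrite ancr0 /=; split => //.
  split => //.
  + move=> y yS eyr; case: (eqVneq y r) => [yr|yr]; first by rewrite yr e_irr in eyr.
    have yS' : y \in S' by rewrite inS' yr.
    rewrite ancr // /tch orbF.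
    case: (F y yS') => _ _ _ [_ Hr _ _].
    move: Hr; rewrite /rho' eyr; case: ifP => //.
  + move=> y yS; rewrite orbF.
    case: (eqVneq y r) => [->|yr]; first by rewrite /lo /hi eqxx; lia.
    have yS' : y \in S' by rewrite inS' yr.
    rewrite ancr // /=.
    rewrite /lo /hi eqxx (negbTE yr).
    have := hiK y yS'.
    case: (F y yS') => _ _ _ [_ _ _ Hi]; have := Hi y yS'; rewrite eqxx /=.
    case: (tch y) => /= ? ?; lia.
-
  have xS' : x \in S' by rewrite inS' xr.
  case: (F x xS') => Hp Hu Hsub [Hc Hrho He Hi].
  have ancx : anc x = if tch x then rcons (anc' x) r else anc' x by rewrite /anc (negbTE xr).
  have lox : lo x = if tch x then lo' x + K else lo' x by rewrite /lo (negbTE xr).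
  have hix : hi x = if tch x then hi' x + K else hi' x by rewrite /hi (negbTE xr).
  split.
  + rewrite ancx; case Et: (tch x) => //.
    by rewrite rcons_path Hp /= e_sym.
  + rewrite ancx; case: (tch x) => //.
    by rewrite -rcons_cons rcons_uniq Hu andbT in_cons negb_or eq_sym xr rnA.
  + move=> z; rewrite ancx; case: (tch x); last by move/Hsub; rewrite inS' => /andP[].
    by rewrite mem_rcons in_cons => /orP[/eqP->//|/Hsub]; rewrite inS' => /andP[].
  split.
  + move=> p rest; rewrite ancx.
    case Ea: (anc' x) => [|q rest'].
      case: (tch x) => //= [[<- <-]]; by rewrite /anc eqxx.
    have qS : q \in S' by apply: Hsub; rewrite Ea mem_head.
    have qr : q != r by move: qS; rewrite inS' => /andP[].
    have tq : tch q = tch x by apply: tchA xS' _; rewrite Ea mem_head.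
    have Eq : anc' q = rest' by apply: Hc Ea.
    case Et: (tch x) => -[<- <-]; by rewrite /anc (negbTE qr) tq Et Eq.
  + rewrite ancx; case Et: (tch x).
      by rewrite last_rcons; apply: rmin.
    move: Hrho; rewrite /rho'; move: Et; rewrite /tch => ->.
    case: ifP => // _; lia.
  + move=> y yS exy; case: (eqVneq y r) => [yr|yr].
      move: yr exy => -> exr; have erx : e r x by rewrite e_sym.
      rewrite ancr // /tch; move: Hrho; rewrite /rho' erx.
      case: (e r (last x (anc' x))) => //=; by rewrite orbT.
    have yS' : y \in S' by rewrite inS' yr.
    by rewrite (ancE x y xS' yr) (ancE y x yS' xr); apply: He.
  + move=> y yS; case: (eqVneq y r) => [->|yr].
      rewrite ancr // /anc eqxx in_nil /= (negbTE xr) /=.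
      rewrite lox hix /lo /hi eqxx.
      have := hiK x xS'; have := Hi x xS'; rewrite eqxx /=.
      case: (tch x) => /= ? ?; lia.
    have yS' : y \in S' by rewrite inS' yr.
    rewrite (ancE x y xS' yr) (ancE y x yS' xr) lox hix /lo /hi (negbTE yr).
    have incomp : tch x != tch y -> false = [|| x == y, x \in anc' y | y \in anc' x].
      move=> Hne; apply/esym/negbTE; rewrite !negb_or; apply/and3P; split.
      - by apply/eqP => exy; rewrite exy eqxx in Hne.
      - by apply/negP => /(tchA _ _ yS') Ht; rewrite Ht eqxx in Hne.
      - by apply/negP => /(tchA _ _ xS') Ht; rewrite Ht eqxx in Hne.
    have hy := hiK y yS'; have hx := hiK x xS'.
    case Ex: (tch x); case Ey: (tch y) => /=.
    * by rewrite -(Hi y yS') !leq_add2r.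
    * rewrite -incomp; last by rewrite Ex Ey.
      apply/negbTE; rewrite negb_and -ltnNge; apply/orP; left.
      exact: (leq_trans hy (leq_addl _ _)).
    * rewrite -incomp; last by rewrite Ex Ey.
      apply/negbTE; rewrite negb_and -ltnNge -ltnNge; apply/orP; right.
      exact: (leq_trans hx (leq_addl _ _)).
    * by rewrite -(Hi y yS').
Qed.
End Forest.

Lemma box_nat (T : finType) (e : rel T) d (lo hi : T -> 'I_d -> nat) :
  (forall v i, lo v i <= hi v i) ->
  (forall u v, u <> v -> (e u v <-> forall i, lo u i <= hi v i /\ lo v i <= hi u i)) ->
  has_box_rep e d.
Proof.
move=> H1 H2; exists (fun v i => INR (lo v i)), (fun v i => INR (hi v i)); split.
  by move=> v i; apply: le_INR; apply/leP.
move=> u v uv; rewrite (H2 u v uv); split.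
  by move=> H i; case: (H i) => a b; split; apply: le_INR; apply/leP.
by move=> H i; case: (H i) => a b; split; apply/leP; apply: INR_le.
Qed.

Lemma mod_diff a t m : 0 < t < m -> a %% m = (a + t) %% m -> False.
Proof.
move=> /andP[t0 tm] H.
have : (a + t == a + 0 %[mod m]) by rewrite addn0 H.
by rewrite eqn_modDl mod0n modn_small // => /eqP; lia.
Qed.

Section Core.
Variable T : finType.
Variable e : rel T.
Hypothesis e_sym : symmetric e.
Hypothesis e_irr : irreflexive e.
Variables (rho : T -> nat) (anc : T -> seq T) (lo0 hi0 : T -> nat).
Hypothesis F : nforest e [set: T] rho anc lo0 hi0.
Variables W m d : nat.
Hypothesis W1 : 1 <= W.
Hypothesis Wm : (W < m) || ((m == 0) && (W == 1)).
Hypothesis dm : 2 + m <= d.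
Hypothesis Hedge : forall x y, e x y -> x \in anc y -> size (anc y) <= size (anc x) + W.

Let depth x := size (anc x).
Let N := \max_(w : T) depth w.
Let bad k v := has (fun u => (depth u %% m == k) && (depth v <= depth u + W) && ~~ e u v) (anc v).

Definition LOn v j := match j with 0 => lo0 v | 1 => depth v
  | k.+2 => if k < m then (if (depth v %% m == k) || bad k v then depth v else 0) else 0 end.
Definition HIn v j := match j with 0 => hi0 v | 1 => depth v + W
  | k.+2 => if k < m then (if depth v %% m == k then depth v else N) else 0 end.

Let Fx x := F (in_setT x).
Let H3 : forall x, x \in [set: T] -> forall p rest, anc x = p :: rest -> anc p = rest.
Proof. by move=> x _; case: (Fx x) => _ _ _ []. Qed.
Let H4 : forall x, x \in [set: T] -> {subset anc x <= [set: T]}.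
Proof. by move=> x _ z; rewrite in_setT. Qed.

Let dN x : depth x <= N.
Proof. rewrite /N; exact: (@leq_bigmax T (fun w => depth w) x). Qed.

Let inter0 u v : (lo0 u <= hi0 v) && (lo0 v <= hi0 u) = [|| u == v, u \in anc v | v \in anc u].
Proof. by case: (Fx u) => _ _ _ [_ _ _ H]; apply: H; rewrite in_setT. Qed.

Let dA u v : u \in anc v -> depth u + (index u (anc v)).+1 = depth v.
Proof. exact: (depth_anc H3 H4 (in_setT v)). Qed.

Lemma LH v j : LOn v j <= HIn v j.
Proof.
case: j => [|[|k]] /=.
- by have := inter0 v v; rewrite eqxx /= => /andP[].
- exact: leq_addr.
- case: ifP => // _; case: ifP => [/orP[->|_]//|/negbT]; rewrite ?negb_or.
  + case: ifP => // _; exact: dN.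
  + by case/andP=> /negbTE ->.
Qed.

Let uniq_col v u u' : W < m -> u \in anc v -> u' \in anc v ->
  depth v <= depth u + W -> depth v <= depth u' + W ->
  depth u %% m = depth u' %% m -> u = u'.
Proof.
move=> Wm' uA uA' d1 d2 Hm.
have := dA uA; have := dA uA' => e1 e2.
apply: (anc_depth_inj H3 H4 (in_setT v) uA uA').
case: (ltngtP (depth u) (depth u')) => // Hlt; exfalso.
- apply: (@mod_diff (depth u) (depth u' - depth u) m); first by apply/andP; split; lia.
  by rewrite Hm; congr (_ %% _); lia.
- apply: (@mod_diff (depth u') (depth u - depth u') m); first by apply/andP; split; lia.
  by rewrite -Hm; congr (_ %% _); lia.
Qed.

Lemma inter_edge u v : e u v -> u \in anc v -> forall j,
  LOn u j <= HIn v j /\ LOn v j <= HIn u j.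
Proof.
move=> euv uA j.
have e1 := dA uA; have e2 := Hedge euv uA.
case: j => [|[|k]] /=.
- by have := inter0 u v; rewrite uA orbT => /andP[].
- split; rewrite /depth in e1 e2 *; lia.
case: ifP => // km.
have Wm' : W < m by move: Wm; case/orP => // /andP[/eqP m0]; rewrite m0 in km.
have cuv : ~~ ((depth u %% m == k) && (depth v %% m == k)).
  apply/negP => /andP[/eqP a /eqP b].
  apply: (@mod_diff (depth u) (index u (anc v)).+1 m); first by apply/andP; split; rewrite /depth in e1 e2 *; lia.
  by rewrite a -b -e1.
case Cu: (depth u %% m == k); case Cv: (depth v %% m == k) => /=.
- by move/negP: cuv; case; rewrite Cu Cv.
- have nb : bad k v = false.
    apply/negbTE/negP => /hasP[u' u'A /andP[/andP[c' d'] ne']].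
    have uu : u = u'.
      apply: (uniq_col Wm' uA u'A).
      + by rewrite /depth in e2 *.
      + exact: d'.
      + by rewrite (eqP Cu) (eqP c').
    by rewrite -uu euv in ne'.
  by rewrite nb; split => //; apply: dN.
- split; first by case: ifP => _; rewrite /depth in e1 *; lia.
  by apply: dN.
- split; (case: ifP => _; [apply: dN | done]).
Qed.

Lemma sep u v : u \in anc v -> ~~ e u v -> exists j : 'I_d,
  ~ (LOn u j <= HIn v j /\ LOn v j <= HIn u j).
Proof.
move=> uA neuv.
have e1 := dA uA.
case Et: (index u (anc v)) => [|t].
  exfalso; move: uA Et; case Ea: (anc v) => [|p rest] //= _.
  case: eqP => [pu|] // _.
  case: (Fx v) => Hp _ _ _; rewrite Ea /= in Hp; case/andP: Hp => evp _.
  by rewrite -pu e_sym evp in neuv.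
rewrite Et in e1.
have d1 : 1 < d by lia.
case: (leqP (depth v) (depth u + W)) => Hw; last first.
  exists (Ordinal d1) => /= -[_]; rewrite /depth in Hw *; lia.
have Wm' : W < m by move: Wm; case/orP => // /andP[_ /eqP W1']; rewrite /depth in Hw e1; lia.
pose k := depth u %% m.
have km : k < m by rewrite ltn_mod; lia.
have dk : k.+2 < d by lia.
exists (Ordinal dk) => /=; rewrite km.
have Cu : depth u %% m == k by [].
have Cv : (depth v %% m == k) = false.
  apply/negbTE/negP => /eqP b.
  apply: (@mod_diff (depth u) t.+2 m); first by apply/andP; split; lia.
  by rewrite e1 b.
have Bv : bad k v.
  apply/hasP; exists u => //; by rewrite Cu Hw neuv.
rewrite Cv Bv /= /k eqxx /= => -[_]; rewrite /depth in e1 *; lia.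
Qed.

Lemma core_box : has_box_rep e d.
Proof.
have d0 : 0 < d by lia.
apply: (@box_nat T e d (fun v i => LOn v i) (fun v i => HIn v i)).
  by move=> v i; apply: LH.
move=> u v uv; split.
- move=> euv i /=.
  case: (Fx u) => _ _ _ [_ _ He _].
  case/orP: (He v (in_setT v) euv) => A.
    exact: (inter_edge euv A).
  have evu : e v u by rewrite e_sym.
  by case: (inter_edge evu A i) => a b; split.
- move=> H; apply/negPn/negP => neuv.
  have [a b] := H (Ordinal d0); move: a b => /= a b.
  have := inter0 u v; rewrite a b => /esym/or3P [/eqP//|A|A].
    by case: (sep A neuv) => j; apply; apply: H.
  rewrite e_sym in neuv.
  case: (sep A neuv) => j; apply; by case: (H j).
Qed.
End Core.
Unset Implicit Arguments.

Theorem theorem13 (T : finType) (e : rel T)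
  (e_sym : symmetric e) (e_irr : irreflexive e) (b : nat) :
  boxicity_eq e b -> 3 < b ->
  exists s : seq T, simple_cycle e s /\ b - 3 <= size s.
Proof.
move=> [_ Hmin] b3.
case: (classic (exists s : seq T, simple_cycle e s /\ b - 3 <= size s)) => // Hno.
exfalso.
have HS : #|[set: T]| <= #|T| by rewrite cardsT.
have [anc [lo0 [hi0 F]]] := nforest_ex e_sym e_irr HS (fun _ => 0).
have H3 : forall x, x \in [set: T] -> forall p rest, anc x = p :: rest -> anc p = rest.
  by move=> x xS; case: (F x xS) => _ _ _ [].
have H4 : forall x, x \in [set: T] -> {subset anc x <= [set: T]}.
  by move=> x _ z; rewrite in_setT.
pose W := maxn 1 (b - 5).
pose m := if 5 <= b then b - 3 else 0.
have : has_box_rep e (b - 1).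
  apply: (@core_box T e e_sym _ anc lo0 hi0 F W m (b - 1)).
  - by rewrite /W; lia.
  - rewrite /m /W; case: ifP => H5; apply/orP; [left|right]; lia.
  - rewrite /m; case: ifP; lia.
  move=> x y exy xA.
  have yS : y \in [set: T] by rewrite in_setT.
  have e1 := depth_anc H3 H4 yS xA.
  have Hi : index x (anc y) < size (anc y) by rewrite index_mem.
  case Et: (index x (anc y)) => [|t].
    by rewrite Et in e1; rewrite /W; lia.
  rewrite Et in e1 Hi.
  have [Hp Hu _ _] := F y yS.
  pose s := y :: take t.+2 (anc y).
  have sc : simple_cycle e s.
    split.
    - by rewrite /s -[y :: take _ _]/(take t.+3 (y :: anc y)); apply: take_uniq.
    - by rewrite /s /= size_takel //.
    - rewrite /s /= rcons_path.
      rewrite -(cat_take_drop t.+2 (anc y)) cat_path in Hp.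
      case/andP: Hp => -> _ /=.
      rewrite (take_nth y Hi) last_rcons -Et nth_index //.
  have : ~ (b - 3 <= size s) by move=> Hs; apply: Hno; exists s.
  rewrite /s /= size_takel // /W; lia.
move/Hmin; lia.
Qed.
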